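(* Let $N\geq1$, $q=2^N$, let $\pi$ be a permutation of $q$ symbols and let $(I,F_\pi)$ be the rotated odometer $F_\pi=\mathfrak{a}\circ R_\pi$ on $I=[0,1)$. Let $I_{per}$ be the set of periodic points of $F_\pi$ and $I_{np}=I\setminus I_{per}$. Then: (i) every point of $I_{per}$ is periodic, and the restriction $F_\pi:I_{per}\to I_{per}$ is well-defined and invertible; (ii) if $I_{per}$ is non-empty, then $I_{per}$ is a finite union of half-open maximal periodic intervals $[x,y)$, $x,y\in I$; thus the set of periods of points of $(I,F_\pi)$ is finite; (iii) $0\in I_{np}$, and $F_\pi:I_{np}\to I_{np}$ is well-defined and invertible at every point of $I_{np}\setminus\{0\}$; (iv) the system $(I_{np},F_\pi)$ is minimal.
   Context: The von Neumann–Kakutani map $\mathfrak{a}:[0,1)\to[0,1)$ is $\mathfrak{a}(x)=x-(1-3\cdot 2^{-n})$ if $x\in[1-2^{1-n},1-2^{-n})$, $n\geq1$. For $q\in\mathbb{N}$ divide $I=[0,1)$ into the $q$ intervals $[k/q,(k+1)/q)$, $0\le k<q$; for a permutation $\pi$ of $q$ symbols, $R_\pi:I\to I$ is the interval exchange translating $[k/q,(k+1)/q)$ onto $[\pi(k)/q,(\pi(k)+1)/q)$. The rotated odometer is $F_\pi=\mathfrak{a}\circ R_\pi$. *)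

(* Defs.v *)
From Stdlib Require Import Reals Lra Lia ZArith Arith List ClassicalEpsilon.
Open Scope R_scope.

Definition in_I (x : R) : Prop := 0 <= x < 1.

Definition is_perm (q : nat) (pi : nat -> nat) : Prop :=
  (forall k, (k < q)%nat -> (pi k < q)%nat) /\
  (forall j k, (j < q)%nat -> (k < q)%nat -> pi j = pi k -> j = k).

Definition vnk_level (x : R) : nat :=
  epsilon (inhabits 1%nat)
    (fun n => (1 <= n)%nat /\ 1 - 2 / 2 ^ n <= x < 1 - 1 / 2 ^ n).

Definition vnk (x : R) : R := x - (1 - 3 / 2 ^ vnk_level x).

(* Interval exchange R_pi: translates [k/q,(k+1)/q) onto [pi k/q,(pi k+1)/q). *)
Definition rot (q : nat) (pi : nat -> nat) (x : R) : R :=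
  let k := Z.to_nat (Int_part (INR q * x)) in
  x + (INR (pi k) - INR k) / INR q.

Definition Fpi (N : nat) (pi : nat -> nat) (x : R) : R :=
  vnk (rot (2 ^ N) pi x).

Definition iterF (F : R -> R) (n : nat) (x : R) : R := Nat.iter n F x.

Definition periodic (F : R -> R) (x : R) : Prop :=
  in_I x /\ exists p : nat, (1 <= p)%nat /\ iterF F p x = x.

Definition I_per (F : R -> R) (x : R) : Prop := periodic F x.
Definition I_np (F : R -> R) (x : R) : Prop := in_I x /\ ~ periodic F x.

Definition least_period (F : R -> R) (x : R) (p : nat) : Prop :=
  (1 <= p)%nat /\ iterF F p x = x /\
  (forall m : nat, (1 <= m)%nat -> (m < p)%nat -> iterF F m x <> x).

Definition per_interval (F : R -> R) (p : nat) (x y : R) : Prop :=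
  x < y /\ forall z, x <= z < y -> in_I z /\ least_period F z p.

Definition max_per_interval (F : R -> R) (x y : R) : Prop :=
  exists p, per_interval F p x y /\
    forall x' y', per_interval F p x' y' -> x' <= x -> y <= y' -> x' = x /\ y' = y.

(* Main.v *)
Require Import Defs.
From Stdlib Require Import Reals Lra Lia ZArith Arith List ClassicalEpsilon Classical.
Open Scope R_scope.

Lemma int_part_eq (n : nat) (r : R) : INR n <= r < INR n + 1 -> Int_part r = Z.of_nat n.
Proof.
  intros H. unfold Int_part.
  assert (up r = Z.of_nat n + 1)%Z; [|lia].
  symmetry; apply tech_up; rewrite plus_IZR, <- INR_IZR_INZ; simpl; lra.
Qed.

Lemma INR_pos_Q (Q : nat) : (0 < Q)%nat -> 0 < INR Q.
Proof. intros; apply lt_0_INR; lia. Qed.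

Lemma grid_int (Q k : nat) t : (0 < Q)%nat -> 0 <= t < 1 ->
  Z.to_nat (Int_part (INR Q * ((INR k + t) / INR Q))) = k.
Proof.
  intros HQ Ht. pose proof (INR_pos_Q Q HQ).
  replace (INR Q * ((INR k + t) / INR Q)) with (INR k + t) by (field; lra).
  rewrite (int_part_eq k); [apply Nat2Z.id| lra].
Qed.

Lemma grid_decomp Q x : (0 < Q)%nat -> 0 <= x < 1 ->
  exists k t, (k < Q)%nat /\ 0 <= t < 1 /\ x = (INR k + t) / INR Q.
Proof.
  intros HQ Hx. pose proof (INR_pos_Q Q HQ).
  set (r := INR Q * x).
  assert (Hr : 0 <= r < INR Q) by (unfold r; split; nra).
  destruct (base_Int_part r) as [H1 H2].
  set (z := Int_part r) in *.
  assert (Hz : (0 <= z)%Z).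
  { assert (-1 < z)%Z; [apply lt_IZR; simpl; lra | lia]. }
  exists (Z.to_nat z), (r - INR (Z.to_nat z)).
  assert (E : INR (Z.to_nat z) = IZR z) by (rewrite INR_IZR_INZ, Z2Nat.id; auto).
  rewrite E. split; [|split; [lra|]].
  - apply INR_lt. rewrite E. lra.
  - unfold r; field; lra.
Qed.

Lemma grid_inj Q k t k' t' : (0 < Q)%nat -> 0 <= t < 1 -> 0 <= t' < 1 ->
  (INR k + t) / INR Q = (INR k' + t') / INR Q -> k = k' /\ t = t'.
Proof.
  intros HQ Ht Ht' E.
  assert (k = k').
  { rewrite <- (grid_int Q k t), <- (grid_int Q k' t'), E; auto. }
  subst; split; auto. pose proof (INR_pos_Q Q HQ).
  apply Rmult_eq_compat_l with (r := INR Q) in E.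
  field_simplify in E; lra.
Qed.


Lemma pow2_pos n : 0 < 2 ^ n.
Proof. apply pow_lt; lra. Qed.

Lemma pow2_ge2 n : (1 <= n)%nat -> 2 <= 2 ^ n.
Proof. intros. replace 2 with (2^1) at 1 by (simpl; lra). apply Rle_pow; lra || lia. Qed.

Lemma pow2_mono n m : (n < m)%nat -> 2 * 2 ^ n <= 2 ^ m.
Proof. intros. replace (2 * 2^n) with (2^(S n)) by (simpl; lra). apply Rle_pow; lra || lia. Qed.

Lemma inv_le2 a b : 0 < a -> 2 * a <= b -> 2 / b <= 1 / a.
Proof.
  intros Ha Hb. assert (0 < b) by lra.
  unfold Rdiv. apply (Rmult_le_reg_r (a * b)); [nra|].
  replace (2 * / b * (a * b)) with (2 * a) by (field; lra).
  replace (1 * / a * (a * b)) with b by (field; lra). lra.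
Qed.

Definition lvl (n : nat) (x : R) := (1 <= n)%nat /\ 1 - 2 / 2 ^ n <= x < 1 - 1 / 2 ^ n.

Lemma lvl_uniq n m x : lvl n x -> lvl m x -> n = m.
Proof.
  unfold lvl; intros [Hn [H1 H2]] [Hm [H3 H4]].
  destruct (lt_eq_lt_dec n m) as [[Hl|Hl]|Hl]; auto.
  - pose proof (inv_le2 _ _ (pow2_pos n) (pow2_mono n m Hl)). lra.
  - pose proof (inv_le2 _ _ (pow2_pos m) (pow2_mono m n Hl)). lra.
Qed.

Lemma vnk_val n x : lvl n x -> vnk x = x - (1 - 3 / 2 ^ n).
Proof.
  intros H. unfold vnk.
  assert (E : vnk_level x = n).
  { unfold vnk_level. apply (lvl_uniq _ _ x); [|exact H].
    apply (epsilon_spec (inhabits 1%nat) (fun n => (1 <= n)%nat /\ 1 - 2 / 2 ^ n <= x < 1 - 1 / 2 ^ n)).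
    exists n; exact H. }
  rewrite E; reflexivity.
Qed.

Lemma small_pow y : 0 < y -> exists m, 1 / 2 ^ m < y.
Proof.
  intros Hy. destruct (pow_lt_1_zero (/2)) with (y := y) as [M HM].
  - rewrite Rabs_pos_eq; lra.
  - auto.
  - exists M. specialize (HM M (le_n _)). rewrite Rabs_pos_eq in HM.
    + rewrite pow_inv in HM. unfold Rdiv; lra.
    + apply pow_le; lra.
Qed.

Lemma lvl_exists x : 0 <= x < 1 -> exists n, lvl n x.
Proof.
  intros Hx. destruct (small_pow (1 - x)) as [m Hm]; [lra|].
  assert (G : forall m x, 0 <= x < 1 - 1 / 2 ^ m -> exists n, lvl n x).
  { clear. induction m as [|m IH]; intros x Hx.
    - simpl in Hx; lra.
    - destruct (Rlt_le_dec x (1 - 1 / 2 ^ m)) as [Hl|Hl].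
      + apply IH; lra.
      + exists (S m). split; [lia|]. simpl.
        replace (2 / (2 * 2 ^ m)) with (1 / 2 ^ m) by (field; apply Rgt_not_eq, pow2_pos).
        simpl in Hx; lra. }
  apply (G m); lra.
Qed.

Lemma lvl2_exists y : 0 < y < 1 -> exists n, (1 <= n)%nat /\ 1 / 2 ^ n <= y < 2 / 2 ^ n.
Proof.
  intros Hy. destruct (small_pow y) as [m Hm]; [lra|].
  assert (G : forall m y, 1 / 2 ^ m <= y < 1 -> exists n, (1 <= n)%nat /\ 1 / 2 ^ n <= y < 2 / 2 ^ n).
  { clear. induction m as [|m IH]; intros y Hy.
    - simpl in Hy; lra.
    - destruct (Rle_lt_dec (1 / 2 ^ m) y) as [Hl|Hl].
      + apply IH; lra.
      + exists (S m). split; [lia|]. simpl.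
        replace (2 / (2 * 2 ^ m)) with (1 / 2 ^ m) by (field; apply Rgt_not_eq, pow2_pos).
        simpl in Hy; lra. }
  apply (G m); lra.
Qed.

Lemma vnk_bounds n x : lvl n x -> 1 / 2 ^ n <= vnk x < 2 / 2 ^ n.
Proof.
  intros H. rewrite (vnk_val n x H). destruct H as [_ [H1 H2]].
  assert (3 / 2^n = 1/2^n + 2/2^n) by (field; apply Rgt_not_eq, pow2_pos). lra.
Qed.

Lemma vnk_range x : 0 <= x < 1 -> 0 < vnk x < 1.
Proof.
  intros Hx. destruct (lvl_exists x Hx) as [n Hn].
  pose proof (vnk_bounds n x Hn). destruct Hn as [Hn _].
  pose proof (pow2_ge2 n Hn). pose proof (pow2_pos n).
  assert (0 < 1 / 2^n) by (apply Rdiv_lt_0_compat; lra).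
  assert (2 / 2^n <= 1).
  { unfold Rdiv. apply (Rmult_le_reg_r (2^n)); auto. field_simplify; lra. }
  lra.
Qed.

Lemma vnk_inj x y : 0 <= x < 1 -> 0 <= y < 1 -> vnk x = vnk y -> x = y.
Proof.
  intros Hx Hy E. destruct (lvl_exists x Hx) as [n Hn]. destruct (lvl_exists y Hy) as [m Hm].
  pose proof (vnk_bounds n x Hn). pose proof (vnk_bounds m y Hm).
  assert (n = m).
  { destruct (lt_eq_lt_dec n m) as [[Hl|Hl]|Hl]; auto.
    - pose proof (inv_le2 _ _ (pow2_pos n) (pow2_mono n m Hl)). lra.
    - pose proof (inv_le2 _ _ (pow2_pos m) (pow2_mono m n Hl)). lra. }
  subst. rewrite (vnk_val m x Hn), (vnk_val m y Hm) in E. lra.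
Qed.

Lemma vnk_surj y : 0 < y < 1 -> exists x, 0 <= x < 1 /\ vnk x = y.
Proof.
  intros Hy. destruct (lvl2_exists y Hy) as [n [Hn [H1 H2]]].
  pose proof (pow2_ge2 n Hn). pose proof (pow2_pos n).
  assert (3 / 2^n = 1/2^n + 2/2^n) by (field; lra).
  assert (0 < 1 / 2^n) by (apply Rdiv_lt_0_compat; lra).
  assert (2 / 2^n <= 1).
  { unfold Rdiv. apply (Rmult_le_reg_r (2^n)); auto. field_simplify; lra. }
  exists (y + (1 - 3 / 2^n)).
  assert (L : lvl n (y + (1 - 3 / 2^n))) by (split; [auto|lra]).
  split; [lra|]. rewrite (vnk_val n _ L). lra.
Qed.

Lemma vnk_scale M t : 0 <= t < 1 -> vnk ((2 ^ M - 1 + t) / 2 ^ M) = vnk t / 2 ^ M.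
Proof.
  intros Ht. destruct (lvl_exists t Ht) as [n Hn].
  pose proof (pow2_pos n) as PA. pose proof (pow2_pos M) as PB.
  assert (L : lvl (n + M) ((2 ^ M - 1 + t) / 2 ^ M)).
  { destruct Hn as [Hn [H1 H2]]. split; [lia|]. rewrite pow_add.
    replace ((2 ^ M - 1 + t) / 2 ^ M) with (1 - (1 - t) / 2^M) by (field; lra).
    replace (2 / (2^n * 2^M)) with ((2 / 2^n) / 2^M) by (field; lra).
    replace (1 / (2^n * 2^M)) with ((1 / 2^n) / 2^M) by (field; lra).
    unfold Rdiv at 1 2 3 4.
    assert (0 < / 2^M) by (apply Rinv_0_lt_compat; auto).
    split.
    - assert ((1 - t) * / 2^M <= 2 / 2^n * / 2^M) by (apply Rmult_le_compat_r; lra). lra.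
    - assert (1 / 2^n * / 2^M < (1 - t) * / 2^M) by (apply Rmult_lt_compat_r; lra). lra. }
  rewrite (vnk_val _ _ L), (vnk_val _ _ Hn), pow_add. field; lra.
Qed.


Lemma least_ex (Pr : nat -> Prop) : (exists n, Pr n) -> exists n, Pr n /\ forall m, (m < n)%nat -> ~ Pr m.
Proof.
  intros [n Hn]. apply NNPP; intros Hc.
  assert (G : forall n m, (m <= n)%nat -> ~ Pr m).
  { induction n0 as [|n0 IH]; intros m Hm Hp.
    - apply Hc. exists m. split; auto. intros; lia.
    - destruct (Nat.eq_dec m (S n0)).
      + subst. apply Hc. exists (S n0). split; auto. intros m' Hm'. apply IH; lia.
      + apply (IH m); auto; lia. }
  exact (G n n (le_n _) Hn).
Qed.

Section Fin.
Variable f : nat -> nat.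
Variable Q : nat.
Hypothesis Hf : forall k, (k < Q)%nat -> (f k < Q)%nat.
Hypothesis Hinj : forall a b, (a < Q)%nat -> (b < Q)%nat -> f a = f b -> a = b.

Lemma iter_lt i k : (k < Q)%nat -> (Nat.iter i f k < Q)%nat.
Proof. induction i; simpl; auto. Qed.

Lemma iter_cancel i a b : (a < Q)%nat -> (b < Q)%nat -> Nat.iter i f a = Nat.iter i f b -> a = b.
Proof.
  induction i; simpl; auto. intros Ha Hb E. apply IHi; auto.
  apply Hinj; auto; apply iter_lt; auto.
Qed.

Lemma perm_return k : (k < Q)%nat -> exists p, (1 <= p <= Q)%nat /\ Nat.iter p f k = k.
Proof.
  intros Hk. apply NNPP; intros Hc.
  set (g := fun i => Nat.iter i f k).
  assert (FP : ForallPairs (fun i j => g i = g j -> i = j) (seq 0 (S Q))).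
  { intros a b Ha Hb E. apply in_seq in Ha. apply in_seq in Hb.
    assert (G : forall i j, (i < j <= Q)%nat -> g i = g j -> False).
    { intros i j Hij Eij. apply Hc. exists (j - i)%nat. split; [lia|].
      unfold g in Eij. replace j with (i + (j - i))%nat in Eij by lia.
      rewrite Nat.iter_add in Eij.
      symmetry. apply (iter_cancel i); auto; apply iter_lt; auto. }
    destruct (lt_eq_lt_dec a b) as [[Hl|Hl]|Hl]; auto.
    - exfalso; apply (G a b); auto; lia.
    - exfalso; apply (G b a); auto; lia. }
  pose proof (@NoDup_map_NoDup_ForallPairs nat nat g _ FP (seq_NoDup _ _)) as ND.
  assert (incl (map g (seq 0 (S Q))) (seq 0 Q)).
  { intros y Hy. apply in_map_iff in Hy. destruct Hy as [i [<- _]].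
    apply in_seq. unfold g. pose proof (iter_lt i k Hk). lia. }
  pose proof (NoDup_incl_length ND H). rewrite length_map, !length_seq in H0. lia.
Qed.

Lemma fin_surj y : (y < Q)%nat -> exists x, (x < Q)%nat /\ f x = y.
Proof.
  intros Hy. destruct (perm_return y Hy) as [p [Hp E]].
  exists (Nat.iter (p - 1) f y). split; [apply iter_lt; auto|].
  replace p with (S (p - 1)) in E by lia. exact E.
Qed.
End Fin.

Lemma find_e M m : (2 <= m <= 2 ^ M)%nat -> exists e, (e < M)%nat /\ (2 ^ e < m <= 2 ^ (e + 1))%nat.
Proof.
  induction M as [|M IH]; intros Hm.
  - simpl in Hm; lia.
  - destruct (le_lt_dec m (2 ^ M)) as [Hl|Hl].
    + destruct (IH (conj (proj1 Hm) Hl)) as [e [He1 He2]]. exists e; split; [lia|auto].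
    + exists M. split; [lia|]. rewrite Nat.add_1_r. lia.
Qed.

Lemma frac_le a b c : 0 < c -> a <= b -> a / c <= b / c.
Proof. intros. unfold Rdiv. apply Rmult_le_compat_r; auto. left; apply Rinv_0_lt_compat; auto. Qed.
Lemma frac_lt a b c : 0 < c -> a < b -> a / c < b / c.
Proof. intros. unfold Rdiv. apply Rmult_lt_compat_r; auto. apply Rinv_0_lt_compat; auto. Qed.

Lemma INR_q N : INR (2 ^ N) = 2 ^ N.
Proof. rewrite pow_INR. reflexivity. Qed.

Definition P (N k : nat) (t : R) := (INR k + t) / INR (2 ^ N).

Lemma q_pos N : (0 < 2 ^ N)%nat.
Proof. apply Nat.neq_0_lt_0, Nat.pow_nonzero; lia. Qed.

Lemma vnk_trans N j : (j < 2 ^ N - 1)%nat ->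
  exists s, (s < 2 ^ N)%nat /\ forall t, 0 <= t < 1 -> vnk (P N j t) = P N s t.
Proof.
  intros Hj. pose proof (q_pos N).
  destruct (find_e N (2 ^ N - j)) as [e [He1 He2]]; [lia|].
  set (n := (N - e)%nat).
  assert (EN : (2 ^ N = 2 ^ n * 2 ^ e)%nat) by (rewrite <- Nat.pow_add_r; f_equal; unfold n; lia).
  rewrite Nat.pow_add_r in He2. simpl in He2.
  assert (Hq : (2 ^ e * 2 <= 2 ^ N)%nat).
  { replace (2^e*2)%nat with (2^(S e))%nat by (simpl; lia). apply Nat.pow_le_mono_r; lia. }
  exists (j + 3 * 2 ^ e - 2 ^ N)%nat. split; [lia|].
  intros t Ht.
  assert (Hs : INR (j + 3 * 2 ^ e - 2 ^ N) = INR j + 3 * 2 ^ e - 2 ^ N).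
  { rewrite minus_INR by lia. rewrite plus_INR, mult_INR, !INR_q. simpl. lra. }
  assert (R1 : INR (2^N) <= INR j + 2 * 2^e).
  { assert (H1 : (2^N <= j + 2 * 2^e)%nat) by lia. apply le_INR in H1.
    rewrite plus_INR, mult_INR, !INR_q in H1. rewrite INR_q. simpl in H1. lra. }
  assert (R2 : INR j + 1 + 2^e <= INR (2^N)).
  { assert (H1 : (j + 1 + 2^e <= 2^N)%nat) by lia. apply le_INR in H1.
    rewrite !plus_INR, !INR_q in H1. rewrite INR_q. simpl in H1. lra. }
  rewrite INR_q in R1, R2.
  assert (PN : 2 ^ N = 2 ^ n * 2 ^ e) by (rewrite <- pow_add; f_equal; unfold n; lia).
  pose proof (pow2_pos n). pose proof (pow2_pos e).
  assert (L : lvl n (P N j t)).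
  { split; [unfold n; lia|]. unfold P. rewrite INR_q.
    replace (1 - 2 / 2^n) with ((2^N - 2 * 2^e) / 2^N) by (rewrite PN; field; lra).
    replace (1 - 1 / 2^n) with ((2^N - 2^e) / 2^N) by (rewrite PN; field; lra).
    split; [apply frac_le|apply frac_lt]; auto; try apply pow2_pos; lra. }
  rewrite (vnk_val n _ L). unfold P. rewrite Hs, INR_q, PN. field. lra.
Qed.

Section F.
Variable N : nat.
Variable pi : nat -> nat.
Hypothesis Hpi : is_perm (2 ^ N) pi.

Notation q := (2 ^ N)%nat.
Notation F := (Fpi N pi).

Lemma q_ge2 (HN : (1 <= N)%nat) : (2 <= q)%nat.
Proof. destruct N as [|M]; [lia|]. simpl. pose proof (q_pos M). lia. Qed.

Lemma rot_P k t : (k < q)%nat -> 0 <= t < 1 -> rot q pi (P N k t) = P N (pi k) t.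
Proof.
  intros Hk Ht. unfold rot. cbv zeta. unfold P. rewrite grid_int by (auto; apply q_pos).
  pose proof (INR_pos_Q _ (q_pos N)). field. lra.
Qed.

Definition T (k : nat) : nat :=
  if Nat.eqb (pi k) (q - 1) then 0%nat
  else Z.to_nat (Int_part (INR q * F (P N k 0))).

Lemma F_reg k t : (k < q)%nat -> pi k <> (q - 1)%nat -> 0 <= t < 1 ->
  F (P N k t) = P N (T k) t /\ (T k < q)%nat.
Proof.
  intros Hk Hne Ht. destruct Hpi as [Hr _].
  pose proof (Hr k Hk).
  destruct (vnk_trans N (pi k)) as [s [Hs E]]; [lia|].
  assert (Fs : forall t, 0 <= t < 1 -> F (P N k t) = P N s t).
  { intros t' Ht'. unfold Fpi. rewrite rot_P; auto. }
  assert (Ts : T k = s).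
  { unfold T. apply Nat.eqb_neq in Hne. rewrite Hne. rewrite Fs by lra.
    unfold P. rewrite grid_int; auto; [apply q_pos|lra]. }
  rewrite Ts. auto.
Qed.

Lemma F_star (HN : (1 <= N)%nat) k t : (k < q)%nat -> pi k = (q - 1)%nat -> 0 <= t < 1 ->
  F (P N k t) = P N 0 (vnk t).
Proof.
  intros Hk He Ht. unfold Fpi. rewrite rot_P, He; auto. unfold P.
  pose proof (q_ge2 HN). rewrite minus_INR by lia. rewrite INR_q. simpl (INR 1).
  rewrite vnk_scale; auto. simpl (INR 0). field. apply Rgt_not_eq, pow2_pos.
Qed.

Lemma T_star k : pi k = (q - 1)%nat -> T k = 0%nat.
Proof. intros He. unfold T. rewrite He, Nat.eqb_refl. reflexivity. Qed.

Lemma P_range k t : (k < q)%nat -> 0 <= t < 1 -> 0 <= P N k t < 1.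
Proof.
  intros Hk Ht. unfold P. pose proof (INR_pos_Q _ (q_pos N)).
  assert (INR k + 1 <= INR q) by (replace 1 with (INR 1) by reflexivity; rewrite <- plus_INR; apply le_INR; lia).
  pose proof (pos_INR k).
  split.
  - unfold Rdiv; apply Rmult_le_pos; [lra| left; apply Rinv_0_lt_compat; auto].
  - unfold Rdiv; apply (Rmult_lt_reg_r (INR q)); auto. rewrite Rmult_assoc, Rinv_l by lra. lra.
Qed.

Lemma decomp x : 0 <= x < 1 -> exists k t, (k < q)%nat /\ 0 <= t < 1 /\ x = P N k t.
Proof. intros. apply grid_decomp; auto. apply q_pos. Qed.

Lemma P_inj k t k' t' : 0 <= t < 1 -> 0 <= t' < 1 -> P N k t = P N k' t' -> k = k' /\ t = t'.
Proof. apply grid_inj. apply q_pos. Qed.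

Lemma rot_range x : 0 <= x < 1 -> 0 <= rot q pi x < 1.
Proof.
  intros Hx. destruct (decomp x Hx) as [k [t [Hk [Ht ->]]]].
  rewrite rot_P; auto. apply P_range; auto. apply Hpi; auto.
Qed.

Lemma F_range x : 0 <= x < 1 -> 0 < F x < 1.
Proof. intros. apply vnk_range, rot_range; auto. Qed.

Lemma F_inj x y : 0 <= x < 1 -> 0 <= y < 1 -> F x = F y -> x = y.
Proof.
  intros Hx Hy E. unfold Fpi in E. apply vnk_inj in E; try apply rot_range; auto.
  destruct (decomp x Hx) as [k [t [Hk [Ht ->]]]].
  destruct (decomp y Hy) as [k' [t' [Hk' [Ht' ->]]]].
  rewrite !rot_P in E; auto. apply P_inj in E; auto. destruct E as [E1 E2].
  apply (proj2 Hpi) in E1; auto. subst; auto.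
Qed.

Lemma F_surj y : 0 < y < 1 -> exists x, 0 <= x < 1 /\ F x = y.
Proof.
  intros Hy. destruct (vnk_surj y Hy) as [u [Hu E]].
  destruct (decomp u Hu) as [j [t [Hj [Ht ->]]]].
  destruct (fin_surj pi q (proj1 Hpi) (proj2 Hpi) j Hj) as [k [Hk Ek]].
  exists (P N k t). split; [apply P_range; auto|]. unfold Fpi. rewrite rot_P, Ek; auto.
Qed.

End F.


Lemma vnk_half t : 0 <= t < 1 -> vnk (t / 2) = (1 + t) / 2.
Proof.
  intros Ht. assert (L : lvl 1 (t / 2)) by (split; [lia|simpl; lra]).
  rewrite (vnk_val 1 _ L). simpl. lra.
Qed.

Lemma vnk_half2 t : 0 <= t < 1 -> vnk ((1 + t) / 2) = vnk t / 2.
Proof.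
  intros Ht. pose proof (vnk_scale 1 t Ht) as E. simpl in E.
  replace ((2 * 1 - 1 + t) / (2 * 1)) with ((1 + t) / 2) in E by field.
  rewrite E. field.
Qed.

Lemma vnk_I t : 0 <= t < 1 -> 0 <= vnk t < 1.
Proof. intros H; pose proof (vnk_range t H); lra. Qed.

Lemma iter_vnk_I m t : 0 <= t < 1 -> 0 <= Nat.iter m vnk t < 1.
Proof. induction m; simpl; auto. intros; apply vnk_I; auto. Qed.

Lemma iter_double m s : 0 <= s < 1 -> Nat.iter (2 * m) vnk (s / 2) = Nat.iter m vnk s / 2.
Proof.
  intros Hs. induction m as [|m IH]; [simpl; auto|].
  replace (2 * S m)%nat with (S (S (2 * m))) by lia.
  change (vnk (vnk (Nat.iter (2 * m) vnk (s / 2))) = vnk (Nat.iter m vnk s) / 2).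
  rewrite IH. pose proof (iter_vnk_I m s Hs).
  rewrite vnk_half, vnk_half2; auto.
Qed.

Lemma iter_double1 m s : 0 <= s < 1 -> Nat.iter (S (2 * m)) vnk (s / 2) = (1 + Nat.iter m vnk s) / 2.
Proof.
  intros Hs. change (vnk (Nat.iter (2 * m) vnk (s / 2)) = (1 + Nat.iter m vnk s) / 2).
  rewrite iter_double; auto. apply vnk_half, iter_vnk_I; auto.
Qed.

Lemma to_half t : 0 <= t < 1 -> exists e s, 0 <= s < 1 /\ Nat.iter e vnk t = s / 2.
Proof.
  intros Ht. destruct (Rlt_le_dec t (1/2)).
  - exists 0%nat, (2 * t). split; [lra|simpl; lra].
  - exists 1%nat, (vnk (2 * t - 1)). split; [apply vnk_I; lra|].
    simpl. rewrite <- vnk_half2 by lra. f_equal. lra.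
Qed.

Lemma odo_aper m : (1 <= m)%nat -> forall t, 0 <= t < 1 -> Nat.iter m vnk t <> t.
Proof.
  induction m as [m IH] using (well_founded_induction lt_wf).
  intros Hm.
  assert (A : forall s, 0 <= s < 1 -> Nat.iter m vnk (s / 2) <> s / 2).
  { intros s Hs E. destruct (Nat.Even_or_Odd m) as [[m' Em]|[m' Em]]; subst m.
    - rewrite iter_double in E by auto.
      apply (IH m') with (t := s); [lia|lia|auto|lra].
    - replace (2 * m' + 1)%nat with (S (2 * m')) in E by lia.
      rewrite iter_double1 in E by auto. pose proof (iter_vnk_I m' s Hs). lra. }
  intros t Ht E. destruct (Rlt_le_dec t (1/2)).
  - apply (A (2 * t)); [lra|]. replace (2 * t / 2) with t by field. auto.
  - apply (A (vnk (2 * t - 1))); [apply vnk_I; lra|].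
    rewrite <- vnk_half2 by lra. replace ((1 + (2 * t - 1)) / 2) with t by field.
    rewrite Nat.iter_swap, E. reflexivity.
Qed.

Lemma odo_cells n : forall t j, 0 <= t < 1 -> (j < 2 ^ n)%nat ->
  exists m, INR j / 2 ^ n <= Nat.iter m vnk t < (INR j + 1) / 2 ^ n.
Proof.
  induction n as [|n IH]; intros t j Ht Hj.
  - exists 0%nat. simpl in Hj. assert (j = 0%nat) by lia. subst. simpl. lra.
  - destruct (to_half t Ht) as [e [s [Hs Es]]]. pose proof (pow2_pos n).
    simpl (2 ^ S n) in *.
    destruct (Nat.lt_ge_cases j (2 ^ n)) as [Hl|Hl].
    + destruct (IH s j Hs Hl) as [m Hm]. exists (2 * m + e)%nat.
      rewrite Nat.iter_add, Es, iter_double by auto.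
      replace (INR j / (2 * 2 ^ n)) with ((INR j / 2^n) / 2) by (field; lra).
      replace ((INR j + 1) / (2 * 2 ^ n)) with (((INR j + 1) / 2^n) / 2) by (field; lra).
      lra.
    + destruct (IH s (j - 2 ^ n)%nat Hs ltac:(rewrite Nat.pow_succ_r in Hj; lia)) as [m Hm]. exists (S (2 * m) + e)%nat.
      rewrite Nat.iter_add, Es, iter_double1 by auto.
      rewrite minus_INR, pow_INR in Hm by lia. simpl (INR 2) in Hm.
      replace (1 + 1) with 2 in Hm by lra.
      replace (INR j / (2 * 2 ^ n)) with ((1 + (INR j - 2 ^ n) / 2^n) / 2) by (field; lra).
      replace ((INR j + 1) / (2 * 2 ^ n)) with ((1 + (INR j - 2 ^ n + 1) / 2^n) / 2) by (field; lra).
      lra.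
Qed.

Lemma odo_dense t z eps : 0 <= t < 1 -> 0 <= z < 1 -> 0 < eps ->
  exists m, Rabs (Nat.iter m vnk t - z) < eps.
Proof.
  intros Ht Hz He. destruct (small_pow eps He) as [n Hn].
  destruct (grid_decomp (2 ^ n) z (q_pos n) Hz) as [j [r [Hj [Hr Ez]]]].
  destruct (odo_cells n t j Ht Hj) as [m Hm]. exists m.
  rewrite INR_q in Ez. pose proof (pow2_pos n).
  replace ((INR j + r) / 2 ^ n) with (INR j / 2^n + r / 2^n) in Ez by (field; lra).
  replace ((INR j + 1) / 2 ^ n) with (INR j / 2^n + 1 / 2^n) in Hm by (field; lra).
  assert (0 <= r / 2^n < 1 / 2^n) by (split; [unfold Rdiv; apply Rmult_le_pos; [lra|left; apply Rinv_0_lt_compat; lra]|apply frac_lt; lra]).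
  apply Rabs_def1; lra.
Qed.


Lemma iter_mult {A} (f : A -> A) p y : Nat.iter p f y = y -> forall m, Nat.iter (m * p) f y = y.
Proof.
  intros E m. induction m as [|m IH]; [reflexivity|].
  simpl. rewrite Nat.iter_add, IH, E. reflexivity.
Qed.

Section Dyn.
Variable N : nat.
Variable pi : nat -> nat.
Hypothesis HN : (1 <= N)%nat.
Hypothesis Hpi : is_perm (2 ^ N) pi.

Notation q := (2 ^ N)%nat.
Notation F := (Fpi N pi).
Notation T := (T N pi).
Notation P := (P N).

Lemma T_lt k : (k < q)%nat -> (T k < q)%nat.
Proof.
  intros Hk. destruct (Nat.eq_dec (pi k) (q - 1)) as [E|E].
  - rewrite T_star; auto. apply q_pos.
  - apply (F_reg N pi Hpi k 0); auto; lra.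
Qed.

Lemma T_inj a b : (a < q)%nat -> (b < q)%nat -> T a = T b -> a = b.
Proof.
  intros Ha Hb E.
  assert (Z : forall a b, (a < q)%nat -> (b < q)%nat -> pi a <> (q - 1)%nat -> pi b = (q - 1)%nat -> T a = T b -> False).
  { clear a b Ha Hb E. intros a b Ha Hb Hna Hsb E.
    rewrite (T_star N pi b Hsb) in E.
    destruct (F_reg N pi Hpi a 0 Ha Hna ltac:(lra)) as [E1 _].
    rewrite E in E1. unfold P in E1. simpl (INR 0) in E1.
    pose proof (F_range N pi Hpi (P a 0) (P_range N a 0 Ha ltac:(lra))).
    unfold P in H. rewrite E1 in H. unfold Rdiv in H. lra. }
  destruct (Nat.eq_dec (pi a) (q - 1)) as [Ea|Ea]; destruct (Nat.eq_dec (pi b) (q - 1)) as [Eb|Eb].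
  - apply (proj2 Hpi); auto; congruence.
  - exfalso; apply (Z b a); auto.
  - exfalso; apply (Z a b); auto.
  - destruct (F_reg N pi Hpi a 0 Ha Ea ltac:(lra)) as [E1 _].
    destruct (F_reg N pi Hpi b 0 Hb Eb ltac:(lra)) as [E2 _].
    assert (E3 : F (P a 0) = F (P b 0)) by (rewrite E1, E2, E; reflexivity).
    apply F_inj in E3; auto; try (apply P_range; auto; lra).
    apply P_inj in E3; try lra. tauto.
Qed.

Lemma iterT_lt i k : (k < q)%nat -> (Nat.iter i T k < q)%nat.
Proof. apply iter_lt. exact T_lt. Qed.

Lemma iterF_I n x : 0 <= x < 1 -> 0 <= Nat.iter n F x < 1.
Proof. induction n; simpl; auto. intros. pose proof (F_range N pi Hpi _ (IHn H)). lra. Qed.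

Lemma orbit m k t : (k < q)%nat -> 0 <= t < 1 ->
  (forall i, (i < m)%nat -> pi (Nat.iter i T k) <> (q - 1)%nat) ->
  Nat.iter m F (P k t) = P (Nat.iter m T k) t.
Proof.
  intros Hk Ht. induction m as [|m IH]; intros H; [reflexivity|].
  simpl. rewrite IH by (intros; apply H; lia).
  apply (F_reg N pi Hpi); auto. apply iterT_lt; auto.
Qed.

Lemma L_props : exists L, (1 <= L)%nat /\ Nat.iter L T 0%nat = 0%nat /\
  (forall i, (i < L - 1)%nat -> pi (Nat.iter i T 0%nat) <> (q - 1)%nat) /\
  pi (Nat.iter (L - 1) T 0%nat) = (q - 1)%nat.
Proof.
  destruct (perm_return T q T_lt T_inj 0 (q_pos N)) as [p [Hp Ep]].
  destruct (least_ex (fun p => (1 <= p)%nat /\ Nat.iter p T 0%nat = 0%nat)) as [L [[HL EL] Hmin]].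
  { exists p; split; [lia|auto]. }
  destruct (fin_surj pi q (proj1 Hpi) (proj2 Hpi) (q - 1)) as [ks [Hks Eks]].
  { pose proof (q_pos N); lia. }
  assert (E : Nat.iter (L - 1) T 0%nat = ks).
  { apply T_inj; [apply iterT_lt, q_pos|auto|].
    rewrite (T_star N pi ks Eks). replace L with (S (L - 1)) in EL by lia. exact EL. }
  exists L. split; [auto|split; [auto|split]].
  - intros i Hi Ei. apply (Hmin (S i)); [lia|]. split; [lia|].
    simpl. apply T_star; auto.
  - rewrite E; auto.
Qed.

Lemma star_step k t : (k < q)%nat -> pi k = (q - 1)%nat -> 0 <= t < 1 -> F (P k t) = P 0 (vnk t).
Proof. intros. apply F_star; auto. Qed.

Lemma ret_m L : (1 <= L)%nat ->
  (forall i, (i < L - 1)%nat -> pi (Nat.iter i T 0%nat) <> (q - 1)%nat) ->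
  pi (Nat.iter (L - 1) T 0%nat) = (q - 1)%nat ->
  forall m s, 0 <= s < 1 -> Nat.iter (m * L) F (P 0 s) = P 0 (Nat.iter m vnk s).
Proof.
  intros HL H1 H2.
  assert (R : forall s, 0 <= s < 1 -> Nat.iter L F (P 0 s) = P 0 (vnk s)).
  { intros s Hs. replace L with (S (L - 1)) by lia. simpl.
    rewrite orbit; auto; [|apply q_pos].
    apply star_step; auto. apply iterT_lt, q_pos. }
  intros m s Hs. induction m as [|m IH]; [reflexivity|].
  simpl. rewrite Nat.iter_add, IH. apply R. apply iter_vnk_I; auto.
Qed.

Lemma to_zero k t : (k < q)%nat -> 0 <= t < 1 -> (exists m, pi (Nat.iter m T k) = (q - 1)%nat) ->
  exists m0, Nat.iter (S m0) F (P k t) = P 0 (vnk t).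
Proof.
  intros Hk Ht Hex. destruct (least_ex _ Hex) as [m0 [Hm0 Hmin]].
  exists m0. simpl. rewrite orbit; auto. apply star_step; auto. apply iterT_lt; auto.
Qed.

Lemma nonper k t : (k < q)%nat -> 0 <= t < 1 -> (exists m, pi (Nat.iter m T k) = (q - 1)%nat) ->
  ~ periodic F (P k t).
Proof.
  intros Hk Ht Hex [HI [p [Hp Ep]]]. unfold iterF in Ep.
  destruct (to_zero k t Hk Ht Hex) as [m0 E0].
  destruct L_props as [L [HL [EL [H1 H2]]]].
  assert (Py : Nat.iter p F (P 0 (vnk t)) = P 0 (vnk t)).
  { rewrite <- E0, <- Nat.iter_add, Nat.add_comm, Nat.iter_add, Ep. reflexivity. }
  pose proof (iter_mult _ _ _ Py L) as E1.
  assert (Hu : 0 <= vnk t < 1) by (apply vnk_I; auto).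
  rewrite Nat.mul_comm, (ret_m L HL H1 H2 p (vnk t) Hu) in E1.
  apply P_inj in E1; [|apply iter_vnk_I; auto|auto].
  apply (odo_aper p Hp (vnk t) Hu). tauto.
Qed.

Lemma per_orbit k t : (k < q)%nat -> 0 <= t < 1 -> (forall m, pi (Nat.iter m T k) <> (q - 1)%nat) ->
  forall m, Nat.iter m F (P k t) = P (Nat.iter m T k) t.
Proof. intros. apply orbit; auto. Qed.

Lemma per_char k t : (k < q)%nat -> 0 <= t < 1 ->
  (periodic F (P k t) <-> forall m, pi (Nat.iter m T k) <> (q - 1)%nat).
Proof.
  intros Hk Ht. split.
  - intros Hp m Em. apply (nonper k t Hk Ht); eauto.
  - intros H. split; [apply P_range; auto|].
    destruct (perm_return T q T_lt T_inj k Hk) as [p [Hp Ep]].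
    exists p. split; [lia|]. unfold iterF. rewrite per_orbit, Ep; auto.
Qed.

Lemma fix_iff k t m : (k < q)%nat -> 0 <= t < 1 -> (forall m, pi (Nat.iter m T k) <> (q - 1)%nat) ->
  (iterF F m (P k t) = P k t <-> Nat.iter m T k = k).
Proof.
  intros Hk Ht H. unfold iterF. rewrite per_orbit; auto. split.
  - intros E. apply P_inj in E; tauto.
  - intros ->. reflexivity.
Qed.

Lemma lp_uniform k t t' p : (k < q)%nat -> 0 <= t < 1 -> 0 <= t' < 1 ->
  least_period F (P k t) p -> least_period F (P k t') p.
Proof.
  intros Hk Ht Ht' [Hp [Ep Hm]].
  assert (Per : periodic F (P k t)) by (split; [apply P_range; auto|exists p; auto]).
  pose proof (proj1 (per_char k t Hk Ht) Per) as Per2. clear Per.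
  split; [auto|split].
  - apply fix_iff; auto. apply (fix_iff k t); auto.
  - intros m H1 H2 E. apply (Hm m H1 H2). apply fix_iff; auto. apply (fix_iff k t'); auto.
Qed.

Definition good k p := (k < q)%nat /\ forall t, 0 <= t < 1 -> least_period F (P k t) p.

Lemma good_of k t p : (k < q)%nat -> 0 <= t < 1 -> least_period F (P k t) p -> good k p.
Proof. intros. split; auto. intros. apply (lp_uniform k t); auto. Qed.

Lemma P_le a s b s' : P a s <= P b s' <-> INR a + s <= INR b + s'.
Proof.
  unfold P. pose proof (INR_pos_Q _ (q_pos N)). split; intros H1.
  - apply (Rmult_le_compat_r (INR q)) in H1; [|lra]. field_simplify in H1; lra.
  - apply frac_le; auto.
Qed.

Lemma P_lt a s b s' : P a s < P b s' <-> INR a + s < INR b + s'.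
Proof.
  unfold P. pose proof (INR_pos_Q _ (q_pos N)). split; intros H1.
  - apply (Rmult_lt_compat_r (INR q)) in H1; [|lra]. field_simplify in H1; lra.
  - apply frac_lt; auto.
Qed.

Lemma run k p : good k p -> exists a b, (a <= k < b)%nat /\ (b <= q)%nat /\
  max_per_interval F (P a 0) (P b 0).
Proof.
  intros Hg.
  destruct (least_ex (fun a => (a <= k)%nat /\ forall i, (a <= i <= k)%nat -> good i p)) as [a [[Hak Ha] Hamin]].
  { exists k. split; auto. intros i Hi. replace i with k by lia. auto. }
  destruct (least_ex (fun c => (c <= q - k - 1)%nat /\ forall i, (k <= i < q - c)%nat -> good i p)) as [c [[Hck Hc] Hcmin]].
  { exists (q - k - 1)%nat. split; auto. intros i Hi. destruct Hg as [Hk _]. replace i with k by lia. auto. }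
  destruct Hg as [Hk Hgk].
  set (b := (q - c)%nat).
  exists a, b. split; [unfold b; lia|]. split; [unfold b; lia|].
  assert (Gall : forall i, (a <= i < b)%nat -> good i p).
  { intros i Hi. destruct (Nat.le_gt_cases i k); [apply Ha; lia|apply Hc; unfold b in *; lia]. }
  assert (Hin : forall z, P a 0 <= z < P b 0 -> exists i s, (a <= i < b)%nat /\ 0 <= s < 1 /\ z = P i s).
  { intros z [Hz1 Hz2].
    assert (Hb : (b <= q)%nat) by (unfold b; lia).
    assert (0 <= z < 1).
    { pose proof (P_range N a 0 ltac:(lia) ltac:(lra)).
      assert (P b 0 <= P q 0).
      { apply P_le. apply le_INR in Hb. lra. }
      assert (P q 0 = 1) by (unfold P; pose proof (INR_pos_Q _ (q_pos N)); field; lra).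
      lra. }
    destruct (decomp N z H) as [i [s [Hi [Hs ->]]]].
    exists i, s. split; [|auto].
    apply P_le in Hz1. apply P_lt in Hz2.
    split.
    - assert (INR a < INR i + 1) by lra. rewrite <- S_INR in H0. apply INR_lt in H0. lia.
    - assert (INR i < INR b) by lra. apply INR_lt in H0. auto. }
  split with p. split.
  - split.
    + apply P_lt. assert (INR a < INR b) by (apply lt_INR; unfold b; lia). lra.
    + intros z Hz. destruct (Hin z Hz) as [i [s [Hi [Hs ->]]]].
      split; [apply P_range; auto; unfold b in *; lia|].
      apply (Gall i Hi); auto.
  - intros x' y' [Hxy Hper] Hx' Hy'. split.
    + destruct (Rle_lt_or_eq_dec _ _ Hx') as [Hlt|]; [exfalso|auto].
      destruct (Hper x' (conj (Rle_refl _) Hxy)) as [[Hx'0 _] _].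
      assert (Ha0 : (a <> 0)%nat).
      { intros ->. unfold P in Hlt. simpl (INR 0) in Hlt. unfold Rdiv in Hlt. lra. }
      set (z := Rmax x' (P (a - 1) 0)).
      assert (Pa1 : P (a - 1) 0 < P a 0).
      { apply P_lt. rewrite minus_INR by lia. simpl. lra. }
      assert (Pab : P a 0 < P b 0).
      { apply P_lt. assert (INR a < INR b) by (apply lt_INR; unfold b; lia). lra. }
      assert (Hz : x' <= z < y').
      { unfold z. split; [apply Rmax_l|]. apply Rmax_lub_lt; lra. }
      destruct (Hper z Hz) as [HzI Hlp].
      destruct (decomp N z HzI) as [i [s [Hi [Hs Ez]]]].
      assert (i = (a - 1)%nat).
      { assert (P (a - 1) 0 <= z) by apply Rmax_r.
        assert (z < P a 0) by (unfold z; apply Rmax_lub_lt; lra).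
        rewrite Ez in H, H0. apply P_le in H. apply P_lt in H0.
        rewrite minus_INR in H by lia. simpl in H.
        assert (INR (a - 1) < INR i + 1) by (rewrite minus_INR by lia; simpl; lra).
        rewrite <- S_INR in H1. apply INR_lt in H1.
        assert (INR i < INR a) by lra. apply INR_lt in H2. lia. }
      subst i. rewrite Ez in Hlp.
      apply (Hamin (a - 1)%nat); [lia|]. split; [lia|].
      intros i0 Hi0. destruct (Nat.eq_dec i0 (a - 1)) as [->|]; [|apply Ha; lia].
      apply (good_of _ s); auto.
    + destruct (Rle_lt_or_eq_dec _ _ Hy') as [Hlt|]; [exfalso|auto].
      assert (Pab : P a 0 < P b 0).
      { apply P_lt. assert (INR a < INR b) by (apply lt_INR; unfold b; lia). lra. }
      destruct (Hper (P b 0) ltac:(lra)) as [HI Hlp].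
      assert (Hbq : (b < q)%nat).
      { destruct HI as [_ HI]. assert (P b 0 < P q 0).
        { assert (P q 0 = 1) by (unfold P; pose proof (INR_pos_Q _ (q_pos N)); field; lra). lra. }
        apply P_lt in H. apply INR_lt. lra. }
      apply (Hcmin (c - 1)%nat); [unfold b in *; lia|]. split; [unfold b in *; lia|].
      intros i Hi. destruct (Nat.eq_dec i b) as [->|]; [|apply Hc; unfold b in *; lia].
      apply (good_of _ 0); auto; lra.
Qed.


Lemma lp_exists x : periodic F x -> exists p, least_period F x p.
Proof.
  intros [HI Hex]. destruct (least_ex _ Hex) as [p [[Hp Ep] Hmin]].
  exists p. split; [auto|split; [auto|]]. intros m H1 H2 E. apply (Hmin m H2). auto.
Qed.

Lemma per_F x : periodic F x -> periodic F (F x).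
Proof.
  intros [HI [p [Hp Ep]]]. split.
  - pose proof (F_range N pi Hpi x HI). unfold in_I; lra.
  - exists p. split; auto. unfold iterF in *. rewrite Nat.iter_swap, Ep. reflexivity.
Qed.

Lemma Rabs_divq w t' : Rabs (P 0 0 + (w - t') / INR q) <= Rabs (w - t').
Proof.
  unfold P. simpl (INR 0). pose proof (INR_pos_Q _ (q_pos N)).
  assert (1 <= INR q) by (replace 1 with (INR 1) by reflexivity; apply le_INR; pose proof (q_pos N); lia).
  replace ((0 + 0) / INR q + (w - t') / INR q) with ((w - t') * / INR q) by (field; lra).
  rewrite Rabs_mult, Rabs_inv, (Rabs_pos_eq (INR q)) by lra.
  pose proof (Rabs_pos (w - t')).
  assert (/ INR q <= 1).
  { replace 1 with (/ 1) by field. apply Rinv_le_contravar; lra. }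
  assert (Rabs (w - t') * / INR q <= Rabs (w - t') * 1) by (apply Rmult_le_compat_l; lra). lra.
Qed.

Lemma main : let F := Fpi N pi in
  ((forall x, I_per F x -> periodic F x) /\
   (forall x, I_per F x -> I_per F (F x)) /\
   (forall y, I_per F y -> exists! x, I_per F x /\ F x = y)) /\
  ((exists x, I_per F x) ->
     exists l : list (R * R),
       (forall xy, In xy l -> max_per_interval F (fst xy) (snd xy)) /\
       (forall z, I_per F z <-> exists xy, In xy l /\ fst xy <= z < snd xy)) /\
  (exists M : nat, forall x p, in_I x -> least_period F x p -> (p <= M)%nat) /\
  (I_np F 0 /\
   (forall x, I_np F x -> I_np F (F x)) /\
   (forall y, I_np F y -> y <> 0 -> exists! x, I_np F x /\ F x = y)) /\
  (forall x z eps, I_np F x -> I_np F z -> 0 < eps ->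
     exists n : nat, Rabs (iterF F n x - z) < eps).
Proof.
  cbv zeta. unfold I_per.
  split; [split; [|split]|split; [|split; [|split]]].
  - auto.
  - apply per_F.
  - intros y [HI [p [Hp Ep]]]. unfold iterF in Ep.
    exists (Nat.iter (p - 1) F y). split; [split|].
    + split; [apply iterF_I; auto|]. exists p. split; auto. unfold iterF.
      rewrite <- Nat.iter_add, Nat.add_comm, Nat.iter_add, Ep. reflexivity.
    + replace p with (S (p - 1)) in Ep by lia. exact Ep.
    + intros x' [[Hx' _] E']. apply (F_inj N pi Hpi); auto; [apply iterF_I; auto|].
      rewrite E'. replace p with (S (p - 1)) in Ep by lia. exact Ep.
  - intros [x0 Hx0].
    destruct (lp_exists x0 Hx0) as [p0 Hp0].
    destruct (decomp N x0 (proj1 Hx0)) as [k0 [t0 [Hk0 [Ht0 E0]]]]. subst x0.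
    destruct (run k0 p0 (good_of k0 t0 p0 Hk0 Ht0 Hp0)) as [a0 [b0 [_ [_ Hm0]]]].
    set (Spec := fun k (ab : R * R) => max_per_interval F (fst ab) (snd ab) /\
                  ((exists p, good k p) -> fst ab <= P k 0 /\ P (S k) 0 <= snd ab)).
    set (g := fun k => epsilon (inhabits (P a0 0, P b0 0)) (Spec k)).
    assert (Hg : forall k, Spec k (g k)).
    { intros k. unfold g. apply epsilon_spec.
      destruct (classic (exists p, good k p)) as [[p Hgp]|Hn].
      - destruct (run k p Hgp) as [a [b [Hab [Hb Hm]]]].
        exists (P a 0, P b 0). split; [exact Hm|]. intros _. simpl. split; apply P_le.
        + assert (a <= k)%nat as Ha by lia. apply le_INR in Ha. lra.
        + assert (S k <= b)%nat as Hb' by lia. apply le_INR in Hb'. lra.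
      - exists (P a0 0, P b0 0). split; [exact Hm0|]. intros Hc; contradiction. }
    exists (map g (seq 0 q)). split.
    + intros xy Hin. apply in_map_iff in Hin. destruct Hin as [k [<- _]]. apply Hg.
    + intros z. split.
      * intros Hz. destruct (lp_exists z Hz) as [p Hp].
        destruct (decomp N z (proj1 Hz)) as [k [t [Hk [Ht ->]]]].
        exists (g k). split; [apply in_map_iff; exists k; split; auto; apply in_seq; lia|].
        destruct (proj2 (Hg k)) as [H1 H2]; [exists p; apply (good_of k t); auto|].
        split.
        -- assert (P k 0 <= P k t) by (apply P_le; lra). lra.
        -- assert (P k t < P (S k) 0) by (apply P_lt; rewrite S_INR; lra). lra.
      * intros [xy [Hin Hz]]. apply in_map_iff in Hin. destruct Hin as [k [<- _]].
        destruct (proj1 (Hg k)) as [p [[_ Hper] _]].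
        destruct (Hper z Hz) as [HI [Hp [Ep _]]]. split; auto. exists p; auto.
  - exists q. intros x p HI [Hp [Ep Hm]].
    destruct (decomp N x HI) as [k [t [Hk [Ht ->]]]].
    assert (Per : periodic F (P k t)) by (split; auto; exists p; auto).
    pose proof (proj1 (per_char k t Hk Ht) Per) as NS.
    destruct (perm_return T q T_lt T_inj k Hk) as [p0 [Hp0 Ep0]].
    destruct (le_lt_dec p q) as [|Hlt]; auto. exfalso.
    apply (Hm p0); [lia|lia|]. apply fix_iff; auto.
  - split; [|split].
    + split; [unfold in_I; lra|]. intros [_ [p [Hp Ep]]]. unfold iterF in Ep.
      replace p with (S (p - 1)) in Ep by lia. simpl in Ep.
      assert (HI0 : 0 <= 0 < 1) by lra.
      pose proof (F_range N pi Hpi _ (iterF_I (p - 1) 0 HI0)). lra.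
    + intros x [HI Hnp]. split; [pose proof (F_range N pi Hpi x HI); unfold in_I; lra|].
      intros [_ [p [Hp Ep]]]. apply Hnp. split; auto. exists p. split; auto.
      unfold iterF in *. rewrite Nat.iter_swap in Ep.
      apply (F_inj N pi Hpi) in Ep; auto. apply iterF_I; auto.
    + intros y [HI Hnp] Hy0.
      destruct (F_surj N pi Hpi y) as [x [Hx Ex]]; [destruct HI; split; [destruct (Req_dec y 0); [contradiction|lra]|auto]|].
      exists x. split; [split; [split; [exact Hx|intros Hper; apply Hnp; rewrite <- Ex; apply per_F; auto]|exact Ex]|].
      intros x' [[Hx' _] E']. apply (F_inj N pi Hpi); auto. congruence.

  - intros x z eps [HxI Hxn] [HzI Hzn] He.
    destruct (decomp N x HxI) as [k [t [Hk [Ht ->]]]].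
    destruct (decomp N z HzI) as [k' [t' [Hk' [Ht' ->]]]].
    assert (Hex : exists m, pi (Nat.iter m T k) = (q - 1)%nat).
    { apply NNPP; intros Hn. apply Hxn. apply per_char; auto. intros m Em. apply Hn; eauto. }
    assert (Hex' : exists m, pi (Nat.iter m T k') = (q - 1)%nat).
    { apply NNPP; intros Hn. apply Hzn. apply per_char; auto. intros m Em. apply Hn; eauto. }
    destruct (to_zero k t Hk Ht Hex) as [m0 E0].
    destruct Hex' as [m' Em'].
    destruct (perm_return T q T_lt T_inj k' Hk') as [p' [Hp' Ep']].
    destruct L_props as [L [HL [EL [H1 H2]]]].
    set (J := ((p' - 1) * S m')%nat).
    assert (EJ : Nat.iter J T 0%nat = k').
    { pose proof (iter_mult T p' k' Ep' (S m')) as E.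
      replace (S m' * p')%nat with (J + S m')%nat in E by (unfold J; nia).
      rewrite Nat.iter_add in E. simpl (Nat.iter (S m') T k') in E.
      rewrite (T_star N pi _ Em') in E. exact E. }
    set (j := (J mod L)%nat).
    assert (Hj : (j < L)%nat) by (apply Nat.mod_upper_bound; lia).
    assert (Ej : Nat.iter j T 0%nat = k').
    { rewrite <- EJ. assert (J = j + J / L * L)%nat.
      { pose proof (Nat.div_mod_eq J L). unfold j. rewrite (Nat.mul_comm (J / L) L). lia. }
      transitivity (Nat.iter (j + J / L * L) T 0%nat); [rewrite Nat.iter_add, (iter_mult T L 0%nat EL); reflexivity|f_equal; symmetry; exact H]. }
    assert (Hu : 0 <= vnk t < 1) by (apply vnk_I; auto).
    destruct (odo_dense (vnk t) t' eps Hu Ht' He) as [n Hn].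
    exists (j + (n * L + S m0))%nat. unfold iterF.
    rewrite !Nat.iter_add, E0, (ret_m L HL H1 H2 n (vnk t) Hu).
    rewrite orbit; [|apply q_pos|apply iter_vnk_I; auto|intros i Hi; apply H1; lia].
    rewrite Ej.
    replace (P k' (Nat.iter n vnk (vnk t)) - P k' t') with (P 0 0 + (Nat.iter n vnk (vnk t) - t') / INR q).
    + eapply Rle_lt_trans; [apply Rabs_divq|exact Hn].
    + unfold P. simpl (INR 0). pose proof (INR_pos_Q _ (q_pos N)). field. lra.
Qed.

End Dyn.


Theorem theorem1p6 (N : nat) (pi : nat -> nat) :
  (1 <= N)%nat -> is_perm (2 ^ N) pi ->
  let F := Fpi N pi in
  (* (i) *)
  ((forall x, I_per F x -> periodic F x) /\
   (forall x, I_per F x -> I_per F (F x)) /\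
   (forall y, I_per F y -> exists! x, I_per F x /\ F x = y)) /\
  (* (ii) *)
  ((exists x, I_per F x) ->
     exists l : list (R * R),
       (forall xy, In xy l -> max_per_interval F (fst xy) (snd xy)) /\
       (forall z, I_per F z <-> exists xy, In xy l /\ fst xy <= z < snd xy)) /\
  (exists M : nat, forall x p, in_I x -> least_period F x p -> (p <= M)%nat) /\
  (* (iii) *)
  (I_np F 0 /\
   (forall x, I_np F x -> I_np F (F x)) /\
   (forall y, I_np F y -> y <> 0 -> exists! x, I_np F x /\ F x = y)) /\
  (* (iv) minimality: every forward orbit in I_np is dense in I_np *)
  (forall x z eps, I_np F x -> I_np F z -> 0 < eps ->
     exists n : nat, Rabs (iterF F n x - z) < eps).
Proof.
  intros HN Hpi. exact (main N pi HN Hpi).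
Qed.
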